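(* Any solution $u^h\in C(G^h)$ of $F^{W,h}[u^h](x)=0$ for all $x\in G^h$ satisfies $$\min_{y\in G^h}g(y)\le u^h(x)\le\max_{y\in G^h}g(y)\qquad\text{for all }x\in G^h;$$ in particular it is bounded independently of $h$.
   Context: Let $\Omega\subset D=[-1,1]^n$, $h>0$, $g\in C(G^h)$. Grid: $G^h=\{x\in h\mathbb{Z}^n: x\in D\}$, $G^h_V=\Omega\cap G^h$, $\partial G^h=G^h\setminus G^h_V$; $C(G^h)$ is the set of functions $G^h\to\mathbb{R}$. A grid direction set $\mathcal{D}^W$ is a finite set of nonzero vectors of $\mathbb{Z}^n$ spanning $\mathbb{R}^n$ and closed under $v\mapsto-v$; $h$ is assumed small enough that $x\pm hv\in G^h$ for all $x\in G^h_V$, $v\in\mathcal{D}^W$. For $v\in\mathcal{D}^W$, $D^h_{vv}u(x)=\frac{u(x+hv)-2u(x)+u(x-hv)}{h^2\|v\|^2}$ ($x\in G^h_V$), $\lambda^h_{\mathcal{D}^W}[u](x)=\min_{v\in\mathcal{D}^W}D^h_{vv}u(x)$, and $F^{W,h}[u](x)=\max\{u(x)-g(x),-\lambda^h_{\mathcal{D}^W}[u](x)\}$ for $x\in G^h_V$, $F^{W,h}[u](x)=u(x)-g(x)$ for $x\in\partial G^h$. *)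

(* Defs.v *)
From HB Require Import structures.
From mathcomp Require Import all_boot all_order all_algebra.
From mathcomp Require Import boolp classical_sets reals constructive_ereal.
Set Implicit Arguments. Unset Strict Implicit. Unset Printing Implicit Defensive.
Import Order.TTheory GRing.Theory Num.Theory.
Local Open Scope ring_scope.

Section Defs.
Variables (R : realType) (n : nat).

Definition inCube (x : 'rV[R]_n) : Prop := forall i : 'I_n, `|x 0 i| <= 1.

Definition dirR (v : 'rV[int]_n) : 'rV[R]_n := map_mx (fun z : int => z%:~R) v.

Definition grid (h : R) (x : 'rV[R]_n) : Prop :=
  (exists k : 'rV[int]_n, x = h *: dirR k) /\ inCube x.

Definition gridV (Omega : set 'rV[R]_n) (h : R) (x : 'rV[R]_n) : Prop :=
  grid h x /\ x \in Omega.

Definition sqnorm (v : 'rV[int]_n) : R := \sum_(i < n) (dirR v 0 i) ^+ 2.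

Definition grid_direction_set (Ds : seq 'rV[int]_n) : Prop :=
  [/\ forall v, v \in Ds -> v != 0,
      forall v, v \in Ds -> - v \in Ds &
      forall z : 'rV[R]_n, exists c : 'I_(size Ds) -> R,
        z = \sum_(j < size Ds) c j *: dirR (nth 0 Ds j)].

Definition Dvv (h : R) (u : 'rV[R]_n -> R) (v : 'rV[int]_n) (x : 'rV[R]_n) : R :=
  (u (x + h *: dirR v) - 2 * u x + u (x - h *: dirR v)) / (h ^+ 2 * sqnorm v).

(* lambda^h_{D^W}[u](x) = min_{v in D^W} D^h_vv u(x)  (min over empty set = +oo) *)
Definition lambdah (h : R) (Ds : seq 'rV[int]_n) (u : 'rV[R]_n -> R)
  (x : 'rV[R]_n) : \bar R :=
  \big[Order.min/+oo%E]_(v <- Ds) (Dvv h u v x)%:E.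

Definition FWh (Omega : set 'rV[R]_n) (h : R) (Ds : seq 'rV[int]_n)
  (g u : 'rV[R]_n -> R) (x : 'rV[R]_n) : \bar R :=
  if x \in Omega then Order.max (u x - g x)%:E (- lambdah h Ds u x)%E
  else (u x - g x)%:E.
End Defs.
Arguments dirR {R n} v : rename.
Arguments sqnorm {R n} v : rename.

(* Main.v *)
Require Import Defs.
From HB Require Import structures.
From mathcomp Require Import all_boot all_order all_algebra.
From mathcomp Require Import boolp classical_sets reals constructive_ereal.
From mathcomp Require Import ring lra zify.
Import Order.TTheory GRing.Theory Num.Theory.
Local Open Scope ring_scope.

Section Aux.
Variables (R : realType) (n : nat).

Definition sqn (y : 'rV[R]_n) : R := \sum_(i < n) (y 0 i) ^+ 2.

Lemma sqn_par (y a : 'rV[R]_n) :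
  sqn (y + a) + sqn (y - a) = 2 * sqn y + 2 * sqn a.
Proof.
rewrite /sqn -big_split /= !mulr_sumr -big_split /=; apply: eq_bigr => i _.
rewrite !mxE; ring.
Qed.

Lemma sqn_scale (h : R) (a : 'rV[R]_n) : sqn (h *: a) = h ^+ 2 * sqn a.
Proof.
rewrite /sqn mulr_sumr; apply: eq_bigr => i _; rewrite !mxE; ring.
Qed.

Lemma sqnorm_gt0 (v : 'rV[int]_n) : v != 0 -> 0 < sqnorm v :> R.
Proof.
move=> vn0.
have [i Hi] : exists i, v 0 i != 0.
  apply/existsP; apply: contraNT vn0 => /existsPn H.
  apply/eqP/matrixP => a b; rewrite !mxE (ord1 a).
  by apply/eqP; move: (H b); rewrite negbK.
rewrite /sqnorm (bigD1 i) //=.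
apply: ltr_pwDl; first by rewrite /dirR mxE lt0r sqr_ge0 andbT sqrf_eq0 intr_eq0.
by apply: sumr_ge0 => j _; apply: sqr_ge0.
Qed.

Lemma bigmin_le (s : seq 'rV[int]_n) (F : 'rV[int]_n -> \bar R) v :
  v \in s -> (\big[Order.min/+oo%E]_(w <- s) F w <= F v)%E.
Proof.
elim: s => [//|a s IH]; rewrite in_cons big_cons => /orP [/eqP->|vs].
  by rewrite ge_min lexx.
by rewrite ge_min (IH vs) orbT.
Qed.

Lemma bigmin_att (s : seq 'rV[int]_n) (F : 'rV[int]_n -> \bar R) :
  \big[Order.min/+oo%E]_(w <- s) F w = +oo%E \/
  exists2 v, v \in s & \big[Order.min/+oo%E]_(w <- s) F w = F v.
Proof.
elim: s => [|a s IH]; first by left; rewrite big_nil.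
rewrite big_cons minEle; case: ifP => _.
  by right; exists a => //; rewrite mem_head.
case: IH => [->|[v vs ->]]; first by left.
by right; exists v => //; rewrite in_cons vs orbT.
Qed.

End Aux.
Section Fin.
Variables (R : realType) (n : nat) (h : R).
Hypothesis hpos : 0 < h.
Definition NN : nat := Num.Def.archi_bound h^-1.
Definition pt (t : {ffun 'I_n -> 'I_(NN.*2.+1)}) : 'rV[R]_n :=
  \row_i (h * ((t i)%:R - NN%:R)).

Lemma grid_rep y : grid h y -> exists t, y = pt t.
Proof.
move=> [[k ->] Hc].
have HN : h^-1 < NN%:R by apply: archi_boundP; rewrite invr_ge0 ltW.
have Hk i : (- (NN%:Z) < k 0 i)%R /\ (k 0 i < NN%:Z)%R.
  have := Hc i; rewrite /dirR !mxE normrM (gtr0_norm hpos) => H.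
  have H2 : `|(k 0 i)%:~R| <= h^-1 :> R.
    by rewrite -(ler_pM2l hpos) mulrV ?unitfE ?gt_eqF.
  have H3 : `|(k 0 i)%:~R| < NN%:R :> R by apply: le_lt_trans HN.
  have H4 : (`|k 0 i| < NN%:Z)%R by rewrite -(ltr_int R) intr_norm.
  by move: H4; rewrite ltr_norml => /andP.
exists [ffun i => inord (absz (k 0 i + NN%:Z))].
apply/matrixP => a i; rewrite !mxE ffunE inordK; last first.
  case: (Hk i) => H1 H2. lia.
congr (_ * _).
have E : (((absz (k 0 i + NN%:Z)))%:R : R) = (k 0 i + NN%:Z)%:~R.
  rewrite -[LHS]/(((absz (k 0 i + NN%:Z)))%:Z%:~R) gez0_abs //.
  case: (Hk i) => H1 H2. lia.
by rewrite (ord1 a) E intrD addrK.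
Qed.
End Fin.
Arguments pt {R n} h t.
Arguments sqn {R n} y.
Arguments sqn_par {R n} y a.
Arguments sqn_scale {R n} h a.
Arguments grid_rep {R n h} hpos {y}.
Arguments sqnorm_gt0 {R n v}.
Arguments bigmin_att {R n} s F.

Theorem mainTheorem7 (R : realType) (n : nat) (Omega : set 'rV[R]_n) (h : R)
    (g : 'rV[R]_n -> R) (Ds : seq 'rV[int]_n) (u : 'rV[R]_n -> R) :
  (forall x, x \in Omega -> inCube x) ->
  0 < h ->
  grid_direction_set R Ds ->
  (forall x, gridV Omega h x -> forall v, v \in Ds ->
     grid h (x + h *: (dirR v : 'rV[R]_n)) /\ grid h (x - h *: (dirR v : 'rV[R]_n))) ->
  (forall x, grid h x -> FWh Omega h Ds g u x = 0%E) ->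
  forall x, grid h x ->
    (exists2 y, grid h y & g y <= u x) /\ (exists2 y, grid h y & u x <= g y).
Proof.
move=> HO hpos [HDs0 _ _] Hnb HF x gx.
have Hout z : grid h z -> z \notin Omega -> u z = g z.
  move=> gz zO; have := HF z gz; rewrite /FWh (negbTE zO) => -[] /eqP.
  by rewrite subr_eq0 => /eqP.
have Hin z : grid h z -> z \in Omega ->
    Order.max (u z - g z)%:E (- lambdah h Ds u z)%E = 0%E.
  by move=> gz zO; have := HF z gz; rewrite /FWh zO.
split; last first.
  exists x => //; case: (boolP (x \in Omega)) => xO; last by rewrite Hout.
  have := Hin x gx xO => E.
  have : (Order.max (u x - g x)%:E (- lambdah h Ds u x)%E <= 0)%E by rewrite E.
  by rewrite ge_max lee_fin subr_le0 => /andP[].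
have [t0 xt0] := grid_rep hpos gx.
pose T := {ffun 'I_n -> 'I_(NN R h).*2.+1}.
pose P : {pred T} := fun t => `[< grid h (pt h t) >].
have Pt0 : P t0 by apply/asboolP; rewrite -xt0.
case: (arg_minP (fun t => u (pt h t)) Pt0) => t1 /asboolP Pt1 Hmin.
pose Q : {pred T} := fun t => P t && (u (pt h t) == u (pt h t1)).
have Qt1 : Q t1 by rewrite /Q eqxx andbT; apply/asboolP.
case: (arg_maxP (fun t => sqn (pt h t)) Qt1) => t2 /andP[/asboolP Pt2 /eqP Et2] Hmax.
set y := pt h t2 in Pt2 Et2 Hmax.
have minp z : grid h z -> u y <= u z.
  move=> gz; have [t zt] := grid_rep hpos gz; rewrite zt in gz *; rewrite Et2; apply: Hmin.
  by apply/asboolP.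
have maxp z : grid h z -> u z = u y -> sqn z <= sqn y.
  move=> gz Ez; have [t zt] := grid_rep hpos gz; rewrite zt; apply: Hmax.
  by rewrite /Q; apply/andP; split; [apply/asboolP; rewrite -zt | rewrite -zt Ez Et2].
exists y => //.
have uyx : u y <= u x by apply: minp.
apply: le_trans uyx.
case: (boolP (y \in Omega)) => yO; last by rewrite Hout.
rewrite leNgt; apply/negP => ltuy.
have E := Hin y Pt2 yO.
have Hl : (- lambdah h Ds u y = 0)%E.
  move: E; rewrite maxEle; case: ifP => // _ /eqP.
  by rewrite eqe subr_eq0 => /eqP Eq; move: ltuy; rewrite Eq ltxx.
have Hl0 : lambdah h Ds u y = 0%E by rewrite -[LHS]oppeK Hl oppe0.
case: (bigmin_att Ds (fun v => (Dvv h u v y)%:E)) => [|[v vDs Ev]].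
  by rewrite -/(lambdah h Ds u y) Hl0.
move: Ev; rewrite -/(lambdah h Ds u y) Hl0 => /eqP; rewrite eqe eq_sym => /eqP Dv0.
have sv := sqnorm_gt0 (HDs0 v vDs).
have den : 0 < h ^+ 2 * sqnorm v.
  by apply: mulr_gt0; [have := mulr_gt0 hpos hpos; rewrite -expr2 | exact: sv].
move: Dv0; rewrite /Dvv => /eqP; rewrite mulf_eq0 invr_eq0 (gt_eqF den) orbF.
set d := dirR v.
move=> /eqP num0.
have [g1 g2] := Hnb y (conj Pt2 yO) v vDs.
have m1 := minp _ g1; have m2 := minp _ g2.
have e1 : u (y + h *: d) = u y by lra.
have e2 : u (y - h *: d) = u y by lra.
have s1 := maxp _ g1 e1; have s2 := maxp _ g2 e2.
have := sqn_par y (h *: d); rewrite sqn_scale => Hp.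
have : 0 < h ^+ 2 * sqn d by [].
lra.
Qed.
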